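(* Let $\alpha,\beta,\gamma$ be real (e.g. $>-1$) and $\delta\neq\pm1$. For all $0\le k\le n$, $L_2\mathcal J_{n,k}=\nu_k\mathcal J_{n,k}$, where $\nu_k=2k$ if $k$ is even, $\nu_k=-2(k+\beta+\gamma+1)$ if $k$ is odd, and $$L_2=\frac{2(y-x)(x+\delta)}{x}R_x\partial_x+\frac{(\gamma+\beta+1)x^2+(\delta\gamma-\beta y)x+\delta y}{x^2}\,(R_x-\mathbb I).$$
   Context: $R_x f(x,y)=f(-x,y)$, $\mathbb I$ is the identity; products of operators are compositions (rightmost acts first), coefficients act by multiplication; the identity is between rational functions of $(x,y)$. For real $a,b$ and $c^2\neq1$, the Big $-1$ Jacobi polynomials are $$J_{n}(x;a,b,c)=\begin{cases}{}_2F_1\!\left(\begin{smallmatrix}-\frac n2,\ \frac{n+a+b+2}{2}\\ \frac{a+1}{2}\end{smallmatrix};\frac{1-x^2}{1-c^2}\right)+\frac{n(1-x)}{(1+c)(a+1)}\,{}_2F_1\!\left(\begin{smallmatrix}1-\frac n2,\ \frac{n+a+b+2}{2}\\ \frac{a+3}{2}\end{smallmatrix};\frac{1-x^2}{1-c^2}\right), & n\text{ even},\\[2mm] {}_2F_1\!\left(\begin{smallmatrix}-\frac{n-1}2,\ \frac{n+a+b+1}{2}\\ \frac{a+1}{2}\end{smallmatrix};\frac{1-x^2}{1-c^2}\right)-\frac{(n+a+b+1)(1-x)}{(1+c)(a+1)}\,{}_2F_1\!\left(\begin{smallmatrix}-\frac{n-1}2,\ \frac{n+a+b+3}{2}\\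 \frac{a+3}{2}\end{smallmatrix};\frac{1-x^2}{1-c^2}\right), & n\text{ odd}.\end{cases}$$ Let $\rho_k(y)=y^k(1-\delta^2/y^2)^{k/2}$ for $k$ even and $\rho_k(y)=y^k(1-\delta^2/y^2)^{(k-1)/2}(1+\delta/y)$ for $k$ odd, and $$\mathcal{J}_{n,k}(x,y)=J_{n-k}\big(y;\alpha,2k+\beta+\gamma+1,(-1)^k\delta\big)\,\rho_k(y)\,J_k\Big(\frac{x}{y};\gamma,\beta,\frac{\delta}{y}\Big).$$ *)

(* Defs.v *)
From Stdlib Require Import Reals Lra Lia Arith.
Open Scope R_scope.

Fixpoint poch (a : R) (j : nat) : R :=
  match j with
  | O => 1
  | S j' => poch a j' * (a + INR j')
  end.

(* When a = -N (N a natural number) the series terminates and this is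
   exactly 2F1(a,b;c;z). *)
Definition hyp2F1_upto (N : nat) (a b c z : R) : R :=
  sum_f_R0 (fun j => poch a j * poch b j / (poch c j * INR (fact j)) * z ^ j) N.

Definition bigm1J (n : nat) (x a b c : R) : R :=
  let z := (1 - x ^ 2) / (1 - c ^ 2) in
  if Nat.even n then
    hyp2F1_upto (Nat.div2 n) (- INR n / 2) ((INR n + a + b + 2) / 2) ((a + 1) / 2) z
    + INR n * (1 - x) / ((1 + c) * (a + 1)) *
      hyp2F1_upto (Nat.div2 n - 1) (1 - INR n / 2) ((INR n + a + b + 2) / 2) ((a + 3) / 2) z
  else
    hyp2F1_upto (Nat.div2 n) (- (INR n - 1) / 2) ((INR n + a + b + 1) / 2) ((a + 1) / 2) z
    - (INR n + a + b + 1) * (1 - x) / ((1 + c) * (a + 1)) *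
      hyp2F1_upto (Nat.div2 n) (- (INR n - 1) / 2) ((INR n + a + b + 3) / 2) ((a + 3) / 2) z.

Definition rho (delta : R) (k : nat) (y : R) : R :=
  if Nat.even k then
    y ^ k * (1 - delta ^ 2 / y ^ 2) ^ (Nat.div2 k)
  else
    y ^ k * (1 - delta ^ 2 / y ^ 2) ^ (Nat.div2 k) * (1 + delta / y).

Definition Jcal (alpha beta gamma delta : R) (n k : nat) (x y : R) : R :=
  bigm1J (n - k) y alpha (2 * INR k + beta + gamma + 1) ((-1) ^ k * delta)
  * rho delta k y
  * bigm1J k (x / y) gamma beta (delta / y).

Definition nu (beta gamma : R) (k : nat) : R :=
  if Nat.even k then 2 * INR k else -2 * (INR k + beta + gamma + 1).

(* Main.v *)
Require Import Defs.
From Stdlib Require Import Reals Lra Lia Arith.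
From Coquelicot Require Import Coquelicot.
Open Scope R_scope.

Lemma poch_S (a : R) (j : nat) : poch a (S j) = poch a j * (a + INR j).
Proof. reflexivity. Qed.

Lemma poch_L (a a' : R) (j : nat) : a' = a + 1 -> poch a (S j) = a * poch a' j.
Proof.
  intros ->. induction j as [|j IH].
  - simpl. ring.
  - rewrite poch_S, IH. simpl. destruct j; simpl; ring.
Qed.

Lemma poch_pos (a : R) (j : nat) : 0 < a -> 0 < poch a j.
Proof.
  intros Ha. induction j as [|j IH]; simpl. lra.
  apply Rmult_lt_0_compat; auto. pose proof (pos_INR j). lra.
Qed.

Lemma poch_zero (a : R) (i n : nat) : (i < n)%nat -> a + INR i = 0 -> poch a n = 0.
Proof.
  intros Hin Hz. induction n as [|n IH]. lia.
  simpl. destruct (Nat.eq_dec i n) as [->|Hne].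
  - rewrite Hz. ring.
  - rewrite IH by lia. ring.
Qed.

Definition psum (c : nat -> R) (N : nat) (z : R) : R :=
  sum_f_R0 (fun j => c j * z ^ j) N.

Lemma psum_derive (c : nat -> R) (N : nat) (z : R) :
  is_derive (psum c N) z
    (psum (fun j => INR (S j) * c (S j)) N z - INR (S N) * c (S N) * z ^ N).
Proof.
  induction N as [|N IH].
  - apply (is_derive_ext (fun _ => c 0%nat * 1)).
    { intros t; reflexivity. }
    replace (psum (fun j => INR (S j) * c (S j)) 0 z - INR 1 * c 1%nat * z ^ 0) with 0
      by (unfold psum; simpl; ring).
    exact (is_derive_const _ _).
  - apply (is_derive_ext (fun t => psum c N t + c (S N) * t ^ (S N))).
    { intros t; reflexivity. }
    evar (l : R).
    replace (psum (fun j : nat => INR (S j) * c (S j)) (S N) z - INR (S (S N)) * c (S (S N)) * z ^ S N) with l.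
    + apply (is_derive_plus (psum c N) (fun t => c (S N) * t ^ (S N))).
      apply IH.
      apply is_derive_scal. apply is_derive_pow. apply is_derive_id.
    + unfold l, psum. simpl sum_f_R0. simpl pred.
      unfold plus, scal, one, mult; simpl. unfold mult; simpl. ring.
Qed.

Lemma zshift (c : nat -> R) (N : nat) (z : R) :
  z * psum (fun j => INR (S j) * c (S j)) N z
  = psum (fun j => INR j * c j) N z + INR (S N) * c (S N) * z ^ (S N).
Proof.
  unfold psum. induction N as [|N IH].
  - simpl. ring.
  - rewrite !tech5, Rmult_plus_distr_l, IH. simpl. ring.
Qed.

Lemma psum_lin4 (k1 k2 k3 k4 : R) c1 c2 c3 c4 N z :
  k1 * psum c1 N z + k2 * psum c2 N z + k3 * psum c3 N z + k4 * psum c4 N z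
  = psum (fun j => k1 * c1 j + k2 * c2 j + k3 * c3 j + k4 * c4 j) N z.
Proof.
  unfold psum. induction N as [|N IH].
  - simpl; ring.
  - rewrite !tech5, <- IH. ring.
Qed.

Lemma psum_zero c N z : (forall j, c j = 0) -> psum c N z = 0.
Proof.
  intros H. unfold psum. induction N as [|N IH].
  - simpl; rewrite H; ring.
  - rewrite tech5, IH, H; ring.
Qed.

Lemma generic (a b m nu C delta x y : R) (F G K G' K' : R -> R) :
  (forall z, is_derive G z (G' z)) -> (forall z, is_derive K z (K' z)) ->
  (forall z, 2*G' z + m/(a+1)*(2*z*K' z + (a+b+2+nu/2)*K z) = 0) ->
  (forall z, 4*z*G' z + 4*z*(m/(a+1))*K' z + 2*m*K z = nu * G z) ->
  a+1 <> 0 -> x<>0 -> y<>0 -> y<>delta -> y <> -delta ->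
  (forall t, F t = C * (G ((1 - (t/y)^2)/(1 - (delta/y)^2))
     + m/((1+delta/y)*(a+1)) * (1 - t/y) * K ((1 - (t/y)^2)/(1-(delta/y)^2)))) ->
  exists d, derivable_pt_lim F (-x) d /\
   2*(y-x)*(x+delta)/x*d + ((a+b+1)*x^2 + (delta*a - b*y)*x + delta*y)/x^2*(F(-x) - F x) = nu * F x.
Proof.
  intros HG HK E1 E2 HA Hx Hy Hd1 Hd2 HF.
  assert (Hc1 : 1 + delta/y <> 0).
  { intro H. apply Hd2. assert (E : delta = (1 + delta/y)*y - y) by (field; auto).
    rewrite H in E. lra. }
  assert (Hc2 : 1 - delta/y <> 0).
  { intro H. apply Hd1. assert (E : delta = y - (1 - delta/y)*y) by (field; auto).
    rewrite H in E. lra. }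
  assert (Hs : 1 - (delta/y)^2 <> 0).
  { replace (1 - (delta/y)^2) with ((1+delta/y)*(1-delta/y)) by ring.
    apply Rmult_integral_contrapositive; auto. }
  set (s := 1 - (delta/y)^2) in *.
  set (L := m/((1+delta/y)*(a+1))) in *.
  set (z0 := (1 - (x/y)^2)/s).
  set (dz := -2*(-x/y)*(1/y)/s).
  exists (C*(G' z0 * dz + L*(-(1/y)*K z0 + (1 - (-x)/y) * K' z0 * dz))).
  split.
  - apply is_derive_Reals.
    apply (is_derive_ext (fun t => C * (G ((1 - (t/y)^2)/s) + L * (1 - t/y) * K ((1 - (t/y)^2)/s)))).
    { intros t; rewrite HF; reflexivity. }
    auto_derive.
    + split; [eexists; apply HG | split; [eexists; apply HK | trivial]].
    + rewrite (is_derive_unique (fun x0 => G x0) _ (G' _) (HG _)).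
      rewrite (is_derive_unique (fun x0 => K x0) _ (K' _) (HK _)).
      replace ((1 + - (- x * / y * (- x * / y * 1))) * / s) with z0 by (unfold z0; field; auto).
      unfold dz. field. auto.
  - rewrite !HF.
    replace ((1 - (- x / y) ^ 2) / s) with z0 by (unfold z0; field; auto).
    fold z0.
    specialize (E1 z0). specialize (E2 z0).
    set (g := G z0) in *. set (k := K z0) in *. set (g' := G' z0) in *. set (k' := K' z0) in *.
    apply Rminus_diag_uniq.
    match goal with |- ?l = 0 => 
      transitivity (C*((4 * z0 * g' + 4 * z0 * (m / (a + 1)) * k' + 2 * m * k - nu * g)
          + 2*(x/y - 1)/(1 + delta/y) * (2 * g' + m / (a + 1) * (2 * z0 * k' + (a + b + 2 + nu / 2) * k)))) end.
    + assert (Hyd : y^2 - delta^2 <> 0).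
      { replace (y^2 - delta^2) with ((y-delta)*(y+delta)) by ring.
        apply Rmult_integral_contrapositive; split; lra. }
      unfold dz, z0, L, s. field. repeat split; auto; lra.
    + rewrite E1. replace (4 * z0 * g' + 4 * z0 * (m / (a + 1)) * k' + 2 * m * k - nu * g) with 0 by lra. ring.
Qed.

Lemma psum_derive0 c N : c (S N) = 0 ->
  forall z, is_derive (psum c N) z (psum (fun j => INR (S j) * c (S j)) N z).
Proof.
  intros Hc z. pose proof (psum_derive c N z) as H. rewrite Hc in H.
  replace (psum (fun j : nat => INR (S j) * c (S j)) N z - INR (S N) * 0 * z ^ N)
    with (psum (fun j : nat => INR (S j) * c (S j)) N z) in H by ring.
  exact H.
Qed.

Lemma E1_gen (g kap : nat -> R) (N : nat) (m A be : R) :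
  kap (S N) = 0 ->
  (forall j, 2*(INR (S j)*g (S j)) + (m/A*2)*(INR j*kap j) + (m/A*be)*kap j + 0 * kap j = 0) ->
  forall z, 2*psum (fun j => INR (S j) * g (S j)) N z
     + m/A*(2*z*psum (fun j => INR (S j) * kap (S j)) N z + be*psum kap N z) = 0.
Proof.
  intros Hk Hc z. pose proof (zshift kap N z) as Z. rewrite Hk in Z.
  transitivity (2*psum (fun j => INR (S j) * g (S j)) N z + (m/A*2)*psum (fun j => INR j * kap j) N z
     + (m/A*be)*psum kap N z + 0 * psum kap N z).
  - replace (2 * z * psum (fun j => INR (S j) * kap (S j)) N z)
      with (2 * (z * psum (fun j => INR (S j) * kap (S j)) N z)) by ring.
    rewrite Z. ring.
  - rewrite psum_lin4. apply psum_zero. exact Hc.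
Qed.

Lemma E2_gen (g kap : nat -> R) (N : nat) (m A nu : R) :
  g (S N) = 0 -> kap (S N) = 0 ->
  (forall j, 4*(INR j*g j) + (4*(m/A))*(INR j*kap j) + (2*m)*kap j + (-nu)*g j = 0) ->
  forall z, 4*z*psum (fun j => INR (S j) * g (S j)) N z
     + 4*z*(m/A)*psum (fun j => INR (S j) * kap (S j)) N z + 2*m*psum kap N z = nu * psum g N z.
Proof.
  intros Hg Hk Hc z. pose proof (zshift kap N z) as Z. rewrite Hk in Z.
  pose proof (zshift g N z) as Zg. rewrite Hg in Zg.
  apply Rminus_diag_uniq.
  transitivity (4*psum (fun j => INR j * g j) N z + (4*(m/A))*psum (fun j => INR j * kap j) N z
     + (2*m)*psum kap N z + (-nu) * psum g N z).
  - replace (4 * z * psum (fun j => INR (S j) * g (S j)) N z)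
      with (4 * (z * psum (fun j => INR (S j) * g (S j)) N z)) by ring.
    replace (4 * z * (m/A) * psum (fun j => INR (S j) * kap (S j)) N z)
      with (4 * (m/A) * (z * psum (fun j => INR (S j) * kap (S j)) N z)) by ring.
    rewrite Z, Zg. ring.
  - rewrite psum_lin4. apply psum_zero. exact Hc.
Qed.

Definition hc (p q r : R) (j : nat) : R := poch p j * poch q j / (poch r j * INR (fact j)).

Lemma hyp_psum N p q r z : hyp2F1_upto N p q r z = psum (hc p q r) N z.
Proof. reflexivity. Qed.

Lemma fact_INR_S j : INR (fact (S j)) = INR (S j) * INR (fact j).
Proof. rewrite <- mult_INR. reflexivity. Qed.

Lemma poch_r2 (r1 r2 : R) j : r2 = r1 + 1 -> r1 <> 0 -> poch r2 j = poch r1 j * (r1 + INR j) / r1.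
Proof.
  intros H Hr. rewrite <- poch_S, (poch_L r1 r2 j H). field. auto.
Qed.

Definition gE (a b : R) (N : nat) := hc (- INR (2*N) / 2) ((INR (2*N) + a + b + 2) / 2) ((a + 1) / 2).
Definition kE (a b : R) (N : nat) := hc (1 - INR (2*N) / 2) ((INR (2*N) + a + b + 2) / 2) ((a + 3) / 2).

Lemma poch_r1_neq a j : -1 < a -> poch ((a+1)/2) j <> 0.
Proof. intros. apply Rgt_not_eq, poch_pos. lra. Qed.

Lemma T1E a b N : -1 < a -> -1 < b -> forall j,
  2*(INR (S j)*gE a b N (S j)) + (INR (2*N)/(a+1)*2)*(INR j*kE a b N j)
  + (INR (2*N)/(a+1)*(a+b+2+2*INR (2*N)/2))*kE a b N j + 0 * kE a b N j = 0.
Proof.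
  intros Ha Hb j. unfold gE, kE, hc.
  rewrite (poch_L (- INR (2*N) / 2) (1 - INR (2*N) / 2) j) by lra.
  rewrite (poch_S ((INR (2*N) + a + b + 2) / 2) j), (poch_S ((a + 1) / 2) j), fact_INR_S.
  rewrite (poch_r2 ((a+1)/2) ((a+3)/2) j) by lra.
  pose proof (poch_r1_neq a j Ha). pose proof (INR_fact_neq_0 j). pose proof (pos_INR j).
  rewrite mult_INR, S_INR. simpl (INR 2).
  field. repeat split; try lra.
Qed.

Lemma T2E a b N : -1 < a -> -1 < b -> forall j,
  4*(INR j*gE a b N j) + (4*(INR (2*N)/(a+1)))*(INR j*kE a b N j)
  + (2*INR (2*N))*kE a b N j + (-(2*INR (2*N)))*gE a b N j = 0.
Proof.
  intros Ha Hb j.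
  assert (rel : poch (- INR (2*N) / 2) j * (- INR (2*N) / 2 + INR j)
                = (- INR (2*N) / 2) * poch (1 - INR (2*N) / 2) j).
  { rewrite <- poch_S. apply poch_L. lra. }
  pose proof (poch_r1_neq a j Ha). pose proof (INR_fact_neq_0 j). pose proof (pos_INR j).
  transitivity (4*poch ((INR (2*N) + a + b + 2) / 2) j/(poch ((a+1)/2) j*INR (fact j))
     *(poch (- INR (2*N) / 2) j * (- INR (2*N) / 2 + INR j) - (- INR (2*N) / 2) * poch (1 - INR (2*N) / 2) j)).
  - unfold gE, kE, hc.
    rewrite (poch_r2 ((a+1)/2) ((a+3)/2) j) by lra.
    rewrite mult_INR. simpl (INR 2).
    field. repeat split; try lra.
  - rewrite rel. ring.
Qed.

Lemma gE_end a b N : gE a b N (S N) = 0.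
Proof.
  unfold gE, hc. rewrite (poch_zero _ N (S N)) by (try lia; rewrite mult_INR; simpl; lra).
  unfold Rdiv; ring.
Qed.

Lemma kE_end a b N i : (1 <= N)%nat -> (N <= i)%nat -> kE a b N i = 0.
Proof.
  intros H1 H2. unfold kE, hc. rewrite (poch_zero _ (N-1) i).
  - unfold Rdiv; ring.
  - lia.
  - rewrite minus_INR by lia. rewrite mult_INR. simpl. lra.
Qed.

Lemma bigE a b N u c : (1 <= N)%nat ->
  bigm1J (2*N) u a b c = psum (gE a b N) N ((1-u^2)/(1-c^2))
    + INR (2*N)/((1+c)*(a+1)) * (1-u) * psum (kE a b N) N ((1-u^2)/(1-c^2)).
Proof.
  intros HN. unfold bigm1J. cbv zeta. rewrite Nat.even_even, Nat.div2_double, !hyp_psum.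
  fold (gE a b N). fold (kE a b N).
  replace (psum (kE a b N) (N - 1) ((1 - u ^ 2) / (1 - c ^ 2)))
    with (psum (kE a b N) N ((1 - u ^ 2) / (1 - c ^ 2))).
  - unfold Rdiv; ring.
  - destruct N as [|N']; [lia|]. replace (S N' - 1)%nat with N' by lia.
    unfold psum. rewrite tech5, (kE_end a b (S N') (S N')) by lia. ring.
Qed.

Definition gO (a b : R) (N : nat) := hc (- (INR (2*N+1) - 1) / 2) ((INR (2*N+1) + a + b + 1) / 2) ((a + 1) / 2).
Definition kO (a b : R) (N : nat) := hc (- (INR (2*N+1) - 1) / 2) ((INR (2*N+1) + a + b + 3) / 2) ((a + 3) / 2).

Lemma T1O a b N : -1 < a -> -1 < b -> forall j,
  2*(INR (S j)*gO a b N (S j)) + (-(INR (2*N+1) + a + b + 1)/(a+1)*2)*(INR j*kO a b N j)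
  + (-(INR (2*N+1) + a + b + 1)/(a+1)*(a+b+2+(-2*(INR (2*N+1) + b + a + 1))/2))*kO a b N j
  + 0 * kO a b N j = 0.
Proof.
  intros Ha Hb j. unfold gO, kO, hc.
  rewrite (poch_S (- (INR (2*N+1) - 1) / 2) j).
  rewrite (poch_L ((INR (2*N+1) + a + b + 1) / 2) ((INR (2*N+1) + a + b + 3) / 2) j) by lra.
  rewrite (poch_L ((a + 1) / 2) ((a + 3) / 2) j) by lra.
  rewrite fact_INR_S.
  assert (poch ((a+3)/2) j <> 0) by (apply Rgt_not_eq, poch_pos; lra).
  pose proof (INR_fact_neq_0 j). pose proof (pos_INR j).
  rewrite S_INR.
  field. repeat split; try lra.
Qed.

Lemma T2O a b N : -1 < a -> -1 < b -> forall j,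
  4*(INR j*gO a b N j) + (4*(-(INR (2*N+1) + a + b + 1)/(a+1)))*(INR j*kO a b N j)
  + (2*(-(INR (2*N+1) + a + b + 1)))*kO a b N j + (-(-2*(INR (2*N+1) + b + a + 1)))*gO a b N j = 0.
Proof.
  intros Ha Hb j. unfold gO, kO, hc.
  assert (1 <= INR (2*N+1)) by (rewrite plus_INR, mult_INR; simpl; pose proof (pos_INR N); lra).
  rewrite (poch_r2 ((INR (2*N+1) + a + b + 1) / 2) ((INR (2*N+1) + a + b + 3) / 2) j) by lra.
  rewrite (poch_r2 ((a + 1) / 2) ((a + 3) / 2) j) by lra.
  pose proof (poch_r1_neq a j Ha). pose proof (INR_fact_neq_0 j). pose proof (pos_INR j).
  field. repeat split; try lra.
Qed.

Lemma pO_end N : - (INR (2*N+1) - 1) / 2 + INR N = 0.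
Proof. rewrite plus_INR, mult_INR. simpl. lra. Qed.

Lemma gO_end a b N : gO a b N (S N) = 0.
Proof.
  unfold gO, hc. rewrite (poch_zero _ N (S N)) by (try lia; apply pO_end).
  unfold Rdiv; ring.
Qed.

Lemma kO_end a b N : kO a b N (S N) = 0.
Proof.
  unfold kO, hc. rewrite (poch_zero _ N (S N)) by (try lia; apply pO_end).
  unfold Rdiv; ring.
Qed.

Lemma even_odd_false N : Nat.even (2*N+1) = false.
Proof. rewrite Nat.even_add, Nat.even_even. reflexivity. Qed.

Lemma bigO a b N u c :
  bigm1J (2*N+1) u a b c = psum (gO a b N) N ((1-u^2)/(1-c^2))
    + (-(INR (2*N+1) + a + b + 1))/((1+c)*(a+1)) * (1-u) * psum (kO a b N) N ((1-u^2)/(1-c^2)).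
Proof.
  unfold bigm1J. cbv zeta. rewrite even_odd_false, Nat.div2_odd', !hyp_psum.
  fold (gO a b N). fold (kO a b N).
  unfold Rdiv; ring.
Qed.

Theorem proposition3p1 (alpha beta gamma delta : R) (n k : nat) :
  -1 < alpha -> -1 < beta -> -1 < gamma ->
  delta <> 1 -> delta <> -1 ->
  (k <= n)%nat ->
  forall x y : R, x <> 0 -> y <> 0 -> y <> delta -> y <> - delta ->
  exists d : R,
    derivable_pt_lim (fun t => Jcal alpha beta gamma delta n k t y) (- x) d /\
    2 * (y - x) * (x + delta) / x * d
    + ((gamma + beta + 1) * x ^ 2 + (delta * gamma - beta * y) * x + delta * y) / x ^ 2
      * (Jcal alpha beta gamma delta n k (- x) y - Jcal alpha beta gamma delta n k x y)
    = nu beta gamma k * Jcal alpha beta gamma delta n k x y.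
Proof.
  intros Ha Hb Hg Hd1 Hd2 Hkn x y Hx Hy Hyd1 Hyd2.
  set (C := bigm1J (n - k) y alpha (2 * INR k + beta + gamma + 1) ((-1) ^ k * delta) * rho delta k y).
  assert (HJ : forall t, Jcal alpha beta gamma delta n k t y = C * bigm1J k (t/y) gamma beta (delta/y))
    by (intros; reflexivity).
  clearbody C.
  destruct (Nat.Even_or_Odd k) as [[N HN]|[N HN]]; subst k.
  - destruct N as [|N'].
    + replace (nu beta gamma (2*0)) with 0 by (unfold nu; simpl; ring).
      apply (generic gamma beta 0 0 C delta x y (fun t => Jcal alpha beta gamma delta n (2*0) t y) (fun _ => 1) (fun _ => 0) (fun _ => 0) (fun _ => 0));
        try (intros; ring); auto; try lra.
      * intros z. exact (is_derive_const _ _).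
      * intros z. exact (is_derive_const _ _).
      * intros t. rewrite HJ. unfold bigm1J, hyp2F1_upto. simpl. unfold Rdiv. rewrite !Rmult_1_l, !Rinv_1. ring.
    + set (N := S N').
      replace (nu beta gamma (2*N)) with (2*INR(2*N)) by (unfold nu; rewrite Nat.even_even; reflexivity).
      apply (generic gamma beta (INR (2*N)) (2*INR(2*N)) C delta x y (fun t => Jcal alpha beta gamma delta n (2*N) t y)
        (psum (gE gamma beta N) N) (psum (kE gamma beta N) N)
        (psum (fun j => INR (S j) * gE gamma beta N (S j)) N)
        (psum (fun j => INR (S j) * kE gamma beta N (S j)) N)); auto; try lra.
      * apply psum_derive0, gE_end.
      * apply psum_derive0, kE_end; unfold N; lia.
      * apply E1_gen. apply kE_end; unfold N; lia. apply T1E; auto.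
      * apply E2_gen. apply gE_end. apply kE_end; unfold N; lia. apply T2E; auto.
      * intros t. rewrite HJ, bigE by (unfold N; lia). reflexivity.
  - replace (nu beta gamma (2*N+1)) with (-2*(INR (2*N+1)+beta+gamma+1))
      by (unfold nu; rewrite even_odd_false; reflexivity).
    apply (generic gamma beta (-(INR (2*N+1) + gamma + beta + 1)) (-2*(INR (2*N+1)+beta+gamma+1)) C delta x y (fun t => Jcal alpha beta gamma delta n (2*N+1) t y)
        (psum (gO gamma beta N) N) (psum (kO gamma beta N) N)
        (psum (fun j => INR (S j) * gO gamma beta N (S j)) N)
        (psum (fun j => INR (S j) * kO gamma beta N (S j)) N)); auto; try lra.
    * apply psum_derive0, gO_end.
    * apply psum_derive0, kO_end.
    * apply E1_gen. apply kO_end. apply T1O; auto.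
    * apply E2_gen. apply gO_end. apply kO_end. apply T2O; auto.
    * intros t. rewrite HJ, bigO. reflexivity.
Qed.
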